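(* For every finite set $A$ of nonzero real numbers with $|A|\geq 2$, \[ \max \{|A+A-A|, |AA/A| \} \gg \frac{|A|^{3/2}}{(\log |A|)^{3/2}}, \] with an absolute implied constant.
   Context: $A+A-A=\{a+b-c:a,b,c\in A\}$ and $AA/A=\{ab/c:a,b,c\in A\}$. *)

(* Defs.v *)
From mathcomp Require Import all_boot all_order all_algebra.
From mathcomp Require Import all_classical all_reals.
From mathcomp Require Import Rstruct exp.
From Stdlib Require Import Reals.
Set Implicit Arguments. Unset Strict Implicit. Unset Printing Implicit Defensive.
Import Order.TTheory GRing.Theory Num.Theory.
Local Open Scope ring_scope.

(* A finite set of reals is represented by a duplicate-free list A;
   |A| = size A. *)

Definition sum_diff (A : seq R) : seq R :=
  undup [seq a + bc.1 - bc.2 | a <- A, bc <- [seq (b, c) | b <- A, c <- A]].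

Definition prod_quot (A : seq R) : seq R :=
  undup [seq a * bc.1 / bc.2 | a <- A, bc <- [seq (b, c) | b <- A, c <- A]].

(* Main.v *)
Require Import Defs.
From mathcomp Require Import all_boot all_order all_algebra.
From mathcomp Require Import all_classical all_reals.
From mathcomp Require Import Rstruct exp.
From Stdlib Require Import Reals.
From mathcomp Require Import zify lra ring.
Import Order.TTheory GRing.Theory Num.Theory.
Local Open Scope ring_scope.
Set Implicit Arguments. Unset Strict Implicit.


Definition isrep (N : nat) (f : nat -> R) (i : 'I_N) : bool :=
  [forall k : 'I_N, ltn k i ==> (f k != f i)].

Definition rnk (N : nat) (f : nat -> R) (j : 'I_N) : nat :=
  #|[set i : 'I_N | (f i < f j) && isrep f i]|.

Lemma rep_exists N (f : nat -> R) (j : 'I_N) : exists i : 'I_N, isrep f i && (f i == f j).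
Proof.
have Pj : (fun i : 'I_N => f i == f j) j by [].
case: (@arg_minnP _ j (fun i : 'I_N => f i == f j) (fun i : 'I_N => nat_of_ord i) Pj) => i0 Hi0 Hmin.
exists i0; rewrite Hi0 andbT; apply/forallP => k; apply/implyP => Hk.
apply/negP => /eqP Hkf.
have := Hmin k; rewrite Hkf (eqP Hi0) eqxx => /(_ isT) H.
by move: Hk; rewrite /ltn /= ltnNge H.
Qed.

Lemma rnk_lt N (f : nat -> R) (j k : 'I_N) : f j < f k -> (rnk f j < rnk f k)%nat.
Proof.
move=> Hjk; rewrite /rnk; apply: proper_card; apply/properP; split.
  apply/fintype.subsetP => i; rewrite !inE => /andP[Hi ->]; rewrite andbT.
  exact: lt_trans Hi Hjk.
case: (rep_exists f j) => i0 /andP[Hr /eqP He].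
exists i0; first by rewrite inE He Hjk Hr.
by rewrite inE He ltxx.
Qed.

Lemma count_inj (N w : nat) (phi : 'I_N -> nat * nat) : injective phi ->
  (w * (N - w * w) <= \sum_(j : 'I_N) ((phi j).1 + (phi j).2))%nat.
Proof.
move=> Hphi.
set L := [pred j : 'I_N | ((phi j).1 < w)%nat && ((phi j).2 < w)%nat].
have HL : (#|L| <= w * w)%nat.
  have -> : #|L| = size (map phi (enum L)) by rewrite size_map cardE.
  have -> : (w * w = size [seq (x, y) | x <- iota 0 w, y <- iota 0 w])%nat.
    by rewrite size_allpairs size_iota.
  apply: uniq_leq_size.
    by rewrite map_inj_uniq // enum_uniq.
  move=> p /mapP[j]; rewrite mem_enum inE => /andP[H1 H2] ->.
  case: (phi j) H1 H2 => x y /= H1 H2.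
  by apply: allpairs_f; rewrite mem_iota.
rewrite (bigID L) /=.
apply: leq_trans (leq_addl _ _).
apply: leq_trans (_ : \sum_(j | ~~ L j) w <= _)%nat; last first.
  apply: leq_sum => j; rewrite /L inE negb_and -!leqNgt => /orP[H|H].
    exact: leq_trans H (leq_addr _ _).
  exact: leq_trans H (leq_addl _ _).
rewrite sum_nat_const mulnC leq_mul2r; apply/orP; right.
have HC := cardC L; rewrite card_ord in HC.
have -> : #|(fun i => ~~ L i)| = #|[predC L]| by apply: eq_card.
rewrite leq_subLR; rewrite -{1}HC leq_add2r; exact: HL.
Qed.



Lemma mem_sd (A : seq R) x y z : x \in A -> y \in A -> z \in A ->
  x + y - z \in sum_diff A.
Proof.
move=> Hx Hy Hz; rewrite /sum_diff mem_undup.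
exact: (allpairs_f (fun a (bc : R * R) => a + bc.1 - bc.2) Hx (allpairs_f pair Hy Hz)).
Qed.

Lemma mem_pq (A : seq R) x y z : x \in A -> y \in A -> z \in A ->
  x * y / z \in prod_quot A.
Proof.
move=> Hx Hy Hz; rewrite /prod_quot mem_undup.
exact: (allpairs_f (fun a (bc : R * R) => a * bc.1 / bc.2) Hx (allpairs_f pair Hy Hz)).
Qed.

Lemma card_le_size (T : finType) (X : {set T}) (f : T -> R) (s : seq R) :
  uniq s -> {in X &, injective f} -> (forall p, p \in X -> f p \in s) ->
  (#|X| <= size s)%nat.
Proof.
move=> Us Hf Hs.
have -> : #|X| = size (map f (enum X)) by rewrite size_map cardE.
apply: uniq_leq_size.
  rewrite map_inj_in_uniq ?enum_uniq // => x y; rewrite !mem_enum; exact: Hf.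
by move=> v /mapP[p]; rewrite mem_enum => Hp ->; apply: Hs.
Qed.

Lemma sum_rnk N (f : nat -> R) : \sum_(j : 'I_N) rnk f j =
  #|[set p : 'I_N * 'I_N | (f p.2 < f p.1) && isrep f p.2]|.
Proof.
rewrite /rnk.
under eq_bigr => j _ do rewrite -sum1_card.
rewrite (pair_big_dep xpredT (fun (j i : 'I_N) => (i \in [set i : 'I_N | (f i < f j) && isrep f i]))) /=.
rewrite -sum1_card; apply: eq_bigl => p; by rewrite !inE.
Qed.



Lemma rep_uniq N (f : nat -> R) (i k : 'I_N) :
  isrep f i -> isrep f k -> f i = f k -> i = k.
Proof.
move=> /forallP Hi /forallP Hk Hik; apply: val_inj => /=.
case: (ltngtP i k) => // H.
  by have := Hk i => /implyP/(_ H); rewrite Hik eqxx.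
by have := Hi k => /implyP/(_ H); rewrite Hik eqxx.
Qed.

Lemma core (A : seq R) (e : R) (n : nat) (a : nat -> R) :
  e * e = 1 -> (forall i, (i < n)%nat -> 0 < a i) ->
  (forall i j, (i < j)%nat -> (j < n)%nat -> a i < a j) ->
  (forall i, (i < n)%nat -> e * a i \in A) ->
  forall w, (w * (n.-1 - w * w) <= size (sum_diff A) + size (prod_quot A))%nat.
Proof.
move=> He Hpos Hinc HA w.
set N := n.-1.
pose d := fun i => a i.+1 - a i.
pose r := fun i => a i.+1 / a i.
have enz : e != 0 by apply/eqP => e0; move: He; rewrite e0 mul0r => /eqP; rewrite eq_sym oner_eq0.
have HiN : forall i : 'I_N, (i.+1 < n)%nat by move=> i; have := ltn_ord i; rewrite /N; lia.
have HiN' : forall i : 'I_N, (i < n)%nat by move=> i; have := HiN i; lia.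
have Hd : forall i : 'I_N, 0 < d i by move=> i; rewrite /d subr_gt0; apply: Hinc => //; exact: HiN.
have Hr : forall i : 'I_N, 1 < r i.
  move=> i; rewrite /r ltr_pdivlMr ?mul1r; last exact: Hpos.
  by apply: Hinc => //; exact: HiN.
have Hle : forall j k : nat, (j < k)%nat -> (k < n)%nat -> a j.+1 <= a k.
  move=> j k Hjk Hk; case: (ltngtP j.+1 k) => H.
  - by apply/ltW/Hinc.
  - by move: H; rewrite ltnS leqNgt Hjk.
  - by rewrite H.
have Hint : forall (j k : 'I_N) z, a j < z < a j.+1 -> a k < z < a k.+1 -> j = k.
  move=> j k z /andP[H1 H2] /andP[H3 H4]; apply: val_inj => /=.
  case: (ltngtP j k) => // H.
    have := Hle j k H (HiN' k) => ?; exfalso; lra.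
  have := Hle k j H (HiN' j) => ?; exfalso; lra.
have Hrd : forall j k : 'I_N, d j = d k -> r j = r k -> j = k.
  move=> j k Hdd Hrr.
  have Pj := Hpos _ (HiN' j); have Pk := Hpos _ (HiN' k).
  have H1 : a j.+1 * a k = a k.+1 * a j.
    apply/eqP; rewrite -eqr_div; first by rewrite -/(r j) -/(r k) Hrr.
      by rewrite gt_eqF.
    by rewrite gt_eqF.
  have Ej : a j.+1 = d j + a j by rewrite /d; ring.
  have Ek : a k.+1 = d j + a k by rewrite Hdd /d; ring.
  rewrite Ej Ek in H1.
  have Dp := Hd j.
  have Eq : a k = a j by nra.
  apply: val_inj => /=; case: (ltngtP j k) => // H.
    by have := Hinc _ _ H (HiN' k); rewrite Eq ltxx.
  by have := Hinc _ _ H (HiN' j); rewrite Eq ltxx.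
have Ed : forall i, a i.+1 = a i + d i by move=> i; rewrite /d; ring.
pose phi := fun j : 'I_N => (rnk d j, rnk r j).
have Hphi : injective phi.
  move=> j k [H1 H2].
  have Edd : d j = d k.
    case: (ltgtP (d j) (d k)) => // H.
      by have := rnk_lt H; rewrite H1 ltnn.
    by have := rnk_lt H; rewrite H1 ltnn.
  have Err : r j = r k.
    case: (ltgtP (r j) (r k)) => // H.
      by have := rnk_lt H; rewrite H2 ltnn.
    by have := rnk_lt H; rewrite H2 ltnn.
  exact: Hrd.
have := count_inj w Hphi; rewrite big_split /= !sum_rnk => H.
apply: leq_trans H _; apply: leq_add.
- apply: (@card_le_size _ _ (fun p : 'I_N * 'I_N => e * (a p.1 + d p.2))).
  + exact: undup_uniq.
  + move=> [j i] [k l]; rewrite !inE /=.  move=> /andP[Hp1 Hp2] /andP[Hq1 Hq2] Heq.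
    have {}Heq := mulfI enz Heq.
    have Ejk : j = k.
      apply: (Hint j k (a j + d i)).
        by have := Hd i => ?; have := Ed j => ?; apply/andP; split; lra.
      by have := Hd l => ?; have := Ed k => ?; rewrite Heq; apply/andP; split; lra.
    subst k.
    have Eil : d i = d l by lra.
    by rewrite (rep_uniq Hp2 Hq2 Eil).
  + move=> [j i] _ /=.
    have -> : e * (a j + d i) = e * a j + e * a i.+1 - e * a i by rewrite /d; ring.
    by apply: mem_sd; apply: HA; [exact: HiN' | exact: HiN | exact: HiN'].
- apply: (@card_le_size _ _ (fun p : 'I_N * 'I_N => e * (a p.1 * r p.2))).
  + exact: undup_uniq.
  + move=> [j i] [k l]; rewrite !inE /= => /andP[Hp1 Hp2] /andP[Hq1 Hq2] Heq.
    have {}Heq := mulfI enz Heq.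
    have Iv : forall (j i : 'I_N), r i < r j -> a j < a j * r i < a j.+1.
      move=> j' i' Hri; have Pj := Hpos _ (HiN' j'); have := Hr i'.
      have -> : a j'.+1 = a j' * r j' by rewrite /r mulrC divfK // gt_eqF.
      move=> Hr1; apply/andP; split; nra.
    have Ejk : j = k.
      apply: (Hint j k (a j * r i)); first exact: Iv.
      by rewrite Heq; apply: Iv.
    subst k.
    have Pj := Hpos _ (HiN' j).
    have Eil : r i = r l by apply: (mulfI (x := a j)) => //; rewrite gt_eqF.
    by rewrite (rep_uniq Hp2 Hq2 Eil).
  + move=> [j i] _ /=.
    have Pi := Hpos _ (HiN' i).
    have Einv : e^-1 = e by apply: (mulfI enz); rewrite mulfV // He.
    have -> : e * (a j * r i) = (e * a j) * (e * a i.+1) / (e * a i).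
      rewrite /r invfM Einv.
      transitivity ((e * e) * (e * (a j * (a i.+1 / a i)))); first by rewrite He mul1r.
      by ring.
    by apply: mem_pq; apply: HA; [exact: HiN' | exact: HiN | exact: HiN'].
Qed.



Lemma choose_B (A : seq R) : uniq A -> (forall a, a \in A -> a != 0) ->
  exists (e : R) (S : seq R), [/\ e * e = 1, uniq S, (forall x, x \in S -> 0 < x),
    (forall x, x \in S -> e * x \in A) & (size A <= 2 * size S)%nat].
Proof.
move=> UA HA.
pose P := [seq x <- A | 0 < x].
pose Q0 := [seq x <- A | x < 0].
have HPQ : (size P + size Q0)%nat = size A.
  rewrite !size_filter -(count_predC (fun x : R => 0 < x) A); congr addn.
  apply: eq_in_count => x /HA Hx /=.
  by rewrite ltNge le_eqVlt eq_sym (negbTE Hx).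
case: (leqP (size Q0) (size P)) => H.
  exists 1, P; split.
  - by rewrite mulr1.
  - exact: filter_uniq.
  - by move=> x; rewrite mem_filter => /andP[].
  - by move=> x; rewrite mem_filter mul1r => /andP[].
  - by rewrite -HPQ mul2n -addnn leq_add2l.
exists (-1), (map -%R Q0); split.
- by rewrite mulrNN mulr1.
- by rewrite map_inj_uniq ?filter_uniq //; exact: oppr_inj.
- by move=> x /mapP[y]; rewrite mem_filter => /andP[Hy _] ->; rewrite oppr_gt0.
- by move=> x /mapP[y]; rewrite mem_filter => /andP[_ Hy] ->; rewrite mulN1r opprK.
- rewrite size_map -HPQ mul2n -addnn leq_add2r; exact: ltnW.
Qed.

Lemma exists_w (N : nat) : exists w, (4 * w * w <= N /\ N < 4 * w.+1 * w.+1)%nat.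
Proof.
elim: N => [|N [w [H1 H2]]]; first by exists 0%nat.
case: (leqP (4 * w.+1 * w.+1) N.+1) => H.
  exists w.+1; split => //; lia.
by exists w; split => //; lia.
Qed.

Lemma nat_bound (n m M : nat) :
  (forall w, w * (m.-1 - w * w) <= 2 * M)%nat -> (n <= M)%nat -> (n <= 2 * m)%nat -> (m <= n)%nat ->
  (2 <= n)%nat -> (n * (n * n) <= 8192 * (M * M))%nat.
Proof.
move=> Hw HnM Hnm Hmn Hn2.
set N := m.-1.
have H7 : (n <= 2 * N.+1)%nat by rewrite /N; lia.
case: (exists_w N) => w [H1 H2].
have := Hw w; rewrite -/N => H3.
set D := (N - w * w)%nat.
have E1 : (3 * N <= 4 * D)%nat by rewrite /D; lia.
have E2 : (3 * N * w <= 4 * D * w)%nat by rewrite leq_mul2r E1 orbT.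
have E3 : (4 * D * w <= 8 * M)%nat.
  have -> : (4 * D * w = 4 * (w * D))%nat by ring.
  have -> : (8 * M = 4 * (2 * M))%nat by ring.
  by rewrite leq_mul2l H3 orbT.
have H4 : (3 * w * N <= 8 * M)%nat.
  have -> : (3 * w * N = 3 * N * w)%nat by ring.
  exact: leq_trans E2 E3.
have HNM : (N <= M)%nat by lia.
have H5 : (3 * w.+1 * N <= 11 * M)%nat.
  rewrite mulnS mulnDl; lia.
have H6 : (9 * (w.+1 * w.+1) * (N * N) <= 121 * (M * M))%nat.
  have := leq_mul H5 H5.
  have -> : (3 * w.+1 * N * (3 * w.+1 * N) = 9 * (w.+1 * w.+1) * (N * N))%nat by ring.
  by have -> : (11 * M * (11 * M) = 121 * (M * M))%nat by ring.
have H8 : (9 * (N * (N * N)) <= 4 * 121 * (M * M))%nat.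
  have : (9 * N * (N * N) <= 9 * (4 * w.+1 * w.+1) * (N * N))%nat.
    by rewrite leq_mul2r leq_mul2l ltnW ?orbT.
  move=> H9.
  have -> : (9 * (N * (N * N)) = 9 * N * (N * N))%nat by ring.
  apply: (leq_trans H9).
  have -> : (9 * (4 * w.+1 * w.+1) * (N * N) = 4 * (9 * (w.+1 * w.+1) * (N * N)))%nat by ring.
  have -> : (4 * 121 * (M * M) = 4 * (121 * (M * M)))%nat by ring.
  by rewrite leq_mul2l H6 orbT.
case: (posnP N) => HN0.
  have Hn : (n <= 2)%nat by rewrite HN0 in H7.
  have : (n * (n * n) <= 2 * (2 * n))%nat by rewrite leq_mul // leq_mul.
  move=> H10; apply: leq_trans H10 _.
  apply: (@leq_trans (4 * M)); first by rewrite mulnA leq_mul2l HnM orbT.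
  have HM0 : (0 < M)%nat by lia.
  have HM : (M <= M * M)%nat by rewrite leq_pmulr.
  apply: (@leq_trans (8192 * M)); last by rewrite leq_mul2l HM orbT.
  by rewrite leq_mul2r orbC.
have H10 : (n <= 4 * N)%nat by lia.
have := leq_mul H10 (leq_mul H10 H10).
move=> H11; apply: leq_trans H11 _.
have -> : (4 * N * (4 * N * (4 * N)) = 64 * (N * (N * N)))%nat by ring.
have : (9 * (64 * (N * (N * N))) <= 9 * (8192 * (M * M)))%nat.
  have -> : (9 * (64 * (N * (N * N))) = 64 * (9 * (N * (N * N))))%nat by ring.
  apply: leq_trans (leq_mul (leqnn 64) H8) _.
  have -> : (64 * (4 * 121 * (M * M)) = 30976 * (M * M))%nat by ring.
  have -> : (9 * (8192 * (M * M)) = 73728 * (M * M))%nat by ring.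
  by rewrite leq_mul2r orbC.
by rewrite leq_mul2l.
Qed.



Lemma ln_gt0_nat (n : nat) : (2 <= n)%nat -> 0 < ln n%:R.
Proof.
move=> Hn.
have H1 : (1 < n%:R :> R) by rewrite ltr1n.
have H1' : Rlt 1 n%:R by apply/RltP.
have := ln_increasing 1 n%:R Rlt_0_1 H1'.
by rewrite ln_1 => /RltP.
Qed.

Lemma ln_le_nat (n : nat) : (2 <= n)%nat -> ln 2%:R <= ln n%:R.
Proof.
move=> Hn; rewrite leq_eqVlt in Hn; case/orP: Hn => [/eqP <- // | Hn].
have H1 : (2%:R < n%:R :> R) by rewrite ltr_nat.
have H0 : (0 < 2%:R :> R) by [].
apply/ltW/RltP; apply: ln_increasing; apply/RltP => //.
Qed.

Theorem mainTheorem10 :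
  exists c : R, 0 < c /\
    forall A : seq R, uniq A -> (forall a, a \in A -> a != 0) ->
      leq 2 (size A) ->
      c * ((size A)%:R `^ (3%:R / 2%:R)) / ((ln (size A)%:R) `^ (3%:R / 2%:R))
        <= Num.max (size (sum_diff A))%:R (size (prod_quot A))%:R.
Proof.
set c0 := (ln 2%:R) `^ (3%:R / 2%:R : R).
have Hc0 : 0 < c0 by apply: powR_gt0; apply: ln_gt0_nat.
exists (c0 / 91%:R); split; first by apply: divr_gt0.
move=> A UA HA Hn.
set n := size A.
case: (choose_B UA HA) => e [S [He US Spos SA HnS]].
have enz : e != 0 by apply/eqP => e0; move: He; rewrite e0 mul0r => /eqP; rewrite eq_sym oner_eq0.
set m := size S.
set s := sort <=%R S.
have Hsz : size s = m by rewrite size_sort.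
have Hsort : sorted <%R s by rewrite sort_lt_sorted.
pose a := fun i => nth 0 s i.
have Hmem : forall i, (i < m)%nat -> a i \in S.
  by move=> i Hi; rewrite -(mem_sort <=%R) mem_nth // Hsz.
have Hinc : forall i j, (i < j)%nat -> (j < m)%nat -> a i < a j.
  move=> i j Hij Hj.
  have Hi' : i \in [pred k | (k < size s)%nat] by rewrite inE Hsz; lia.
  have Hj' : j \in [pred k | (k < size s)%nat] by rewrite inE Hsz.
  have := @sorted_ltn_nth _ _ (@lt_trans _ R) 0 s Hsort i j Hi' Hj' Hij. by [].
have Hcore := core (n:=m) (a:=a) He (fun i Hi => Spos _ (Hmem i Hi)) Hinc
  (fun i Hi => SA _ (Hmem i Hi)).
set sd := size (sum_diff A).
set pq := size (prod_quot A).
set M := maxn sd pq.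
have Hw : forall w, (w * (m.-1 - w * w) <= 2 * M)%nat.
  move=> w; apply: leq_trans (Hcore w) _.
  by rewrite mul2n -addnn leq_add ?leq_maxl ?leq_maxr.
have HnM : (n <= M)%nat.
  apply: leq_trans (leq_maxl sd pq); apply: uniq_leq_size => // x Hx.
  have -> : x = x + x - x by rewrite addrK.
  exact: mem_sd.
have Hmn : (m <= n)%nat.
  rewrite /m -(size_map ( *%R e)); apply: uniq_leq_size.
    by rewrite map_inj_uniq //; exact: mulfI.
  by move=> y /mapP[x Hx ->]; apply: SA.
have Hnat := nat_bound Hw HnM HnS Hmn Hn.
have HMmax : M%:R <= Num.max sd%:R pq%:R :> R.
  rewrite le_max; case: (leqP pq sd) => h.
    by rewrite /M (maxn_idPl h) lexx.
  by rewrite /M (maxn_idPr (ltnW h)) lexx orbT.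
apply: le_trans HMmax.
set X := n%:R `^ (3%:R / 2%:R : R).
set Y := (ln n%:R) `^ (3%:R / 2%:R : R).
have HX0 : 0 <= X by apply: powR_ge0.
have HX2 : X ^+ 2 = n%:R ^+ 3.
  rewrite -powR_mulrn // /X -powRrM.
  have -> : (3%:R / 2%:R : R) * 2%:R = 3%:R by rewrite divfK // pnatr_eq0.
  by rewrite powR_mulrn.
have HXM2 : X ^+ 2 <= 8192%:R * M%:R ^+ 2.
  rewrite HX2 -!natrX -natrM ler_nat.
  by rewrite !expnS expn0 !muln1.
have HM0 : 0 <= M%:R :> R by [].
have HXM : X <= 91%:R * M%:R by nra.
have HY : c0 <= Y.
  apply: ge0_ler_powR; rewrite ?nnegrE //;
    first [ exact: ln_le_nat | by apply/ltW/ln_gt0_nat | by apply: divr_ge0 ].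
have HY0 : 0 < Y by apply: lt_le_trans HY.
rewrite ler_pdivrMr //.
have Hc : c0 / 91%:R * 91%:R = c0 by rewrite divfK // pnatr_eq0.
nra.
Qed.
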